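(* Let $d\in\mathbb{N}$, $d\geq 1$. There is no $d$-dimensional freezing cellular automaton $F$ such that, for every $d$-dimensional freezing cellular automaton $G$ with von Neumann neighborhood $\mathrm{VN}_d$, $F$ simulates $G$ with context $C=\{\vec 0\}$ (for some slowdown $T>0$ and some rectangular block $B$).
   Context: A $d$-dimensional cellular automaton (CA) is $F=(d,Q,N,f)$ with $Q$ a finite state set, $N\subset\mathbb{Z}^d$ a finite neighborhood and $f:Q^N\to Q$; its global map on $Q^{\mathbb{Z}^d}$ is $F(c)_z=f(c|_{z+N})$. A CA is $\preceq$-freezing for a partial order $\preceq$ on $Q$ if $F(c)_z\preceq c_z$ for every configuration $c$ and cell $z$; it is freezing if it is $\preceq$-freezing for some partial order. The von Neumann neighborhood is $\mathrm{VN}_d=\{\vec 0,\pm e_1,\dots,\pm e_d\}$ where $e_1,\dots,e_d$ is the canonical basis. Simulation: let $F=(d,Q_F,N,f)$, $G=(d,Q_G,N',g)$, $T>0$, $B\subseteq\mathbb{Z}^d$ a rectangular block with size-vector $b\in\mathbb{Z}^d$, and $C\subset\mathbb{Z}^d$ finite with $\vec0\in C$. $F$ simulates $G$ with slowdown $T$, block $B$ and context $C$ if there is a map $\phi:Q_G^C\to Q_F^B$ such that the map $\bar\phi:Q_G^{\mathbb{Z}^d}\to Q_F^{\mathbb{Z}^d}$ defined by $\bar\phi(c)_{bz+r}=\phi(c|_{z+C})_r$ for $z\in\mathbb{Z}^d$, $r\in B$ (with $bz$ the componentwise product) is injective and satisfies $\bar\phi(G(c))=F^T(\bar\phi(c))$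 for all $c$. The simulation is called context-free when $C=\{\vec 0\}$. *)

(* Defs.v *)
From HB Require Import structures.
From mathcomp Require Import all_boot all_order all_algebra.
Set Implicit Arguments. Unset Strict Implicit. Unset Printing Implicit Defensive.
Import Order.TTheory GRing.Theory Num.Theory.

Definition vec (d : nat) := 'I_d -> int.

Definition vzero (d : nat) : vec d := fun _ => 0%R.
Definition vadd (d : nat) (x y : vec d) : vec d := fun i => (x i + y i)%R.
Definition vopp (d : nat) (x : vec d) : vec d := fun i => (- x i)%R.
Definition unitv {d : nat} (j : 'I_d) : vec d := fun i => if i == j then 1%R else 0%R.

Definition VN (d : nat) : seq (vec d) :=
  @vzero d :: flatten [seq [:: unitv j; vopp (unitv j)] | j <- enum 'I_d].

(* A CA (d, Q, N, f): the neighborhood N is a finite list of vectors and the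
   local rule f reads one state per element of N (i.e. f : Q^N -> Q). *)
Definition global (d : nat) (Q : finType) (N : seq (vec d))
  (f : {ffun 'I_(size N) -> Q} -> Q) (c : vec d -> Q) : vec d -> Q :=
  fun z => f [ffun i : 'I_(size N) => c (vadd z (nth (@vzero d) N i))].

Definition freezing (d : nat) (Q : finType) (N : seq (vec d))
  (f : {ffun 'I_(size N) -> Q} -> Q) : Prop :=
  exists le : rel Q,
    [/\ reflexive le, antisymmetric le, transitive le &
        forall (c : vec d -> Q) (z : vec d), le (global f c z) (c z)].

(* The block encoding phibar for a context-free simulation with block
   B = prod_i [0, b_i) and phi : Q_G -> Q_F^B: every cell x writes uniquely
   as x = b z + r with r in B, namely z_i = x_i div b_i, r_i = x_i mod b_i. *)
Definition phibar (d : nat) (QG QF : Type) (b : vec d) (phi : QG -> vec d -> QF)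
  (c : vec d -> QG) : vec d -> QF :=
  fun x => phi (c (fun i => (x i %/ b i)%Z)) (fun i => (x i %% b i)%Z).

(* F simulates G with some slowdown T > 0, some rectangular block B (size
   vector b with positive entries) and context C = {0}. *)
Definition simulates_cf (d : nat) (QF : finType) (NF : seq (vec d))
  (fF : {ffun 'I_(size NF) -> QF} -> QF)
  (QG : finType) (NG : seq (vec d)) (fG : {ffun 'I_(size NG) -> QG} -> QG) : Prop :=
  exists T : nat, (0 < T)%N /\
  exists b : vec d, (forall i, (0 < b i)%R) /\
  exists phi : QG -> vec d -> QF,
    (forall c1 c2 : vec d -> QG,
        (forall x, phibar b phi c1 x = phibar b phi c2 x) -> forall z, c1 z = c2 z)
    /\ (forall (c : vec d -> QG) (x : vec d),
          phibar b phi (global fG c) x = iter T (global fF) (phibar b phi c) x).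

(* Main.v *)
Require Import Defs.
From mathcomp Require Import all_boot all_order all_algebra.
From mathcomp Require Import zify.
From Stdlib Require Import FunctionalExtensionality.
Set Implicit Arguments. Unset Strict Implicit. Unset Printing Implicit Defensive.
Import Order.TTheory GRing.Theory Num.Theory.

Lemma size_flat2 (A T : Type) (f g : A -> T) (s : seq A) :
  size (flatten [seq [:: f x; g x] | x <- s]) = (size s).*2.
Proof. by elim: s => //= x s ->. Qed.

Lemma nth_flat2 (A T : Type) (x0 : T) (a0 : A) (f g : A -> T) (s : seq A) k :
  (k < size s)%N ->
  nth x0 (flatten [seq [:: f x; g x] | x <- s]) k.*2 = f (nth a0 s k) /\
  nth x0 (flatten [seq [:: f x; g x] | x <- s]) k.*2.+1 = g (nth a0 s k).
Proof.
elim: s k => [|x s IH] [|k] //=; rewrite ltnS => /IH.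
done.
Qed.

Lemma size_VN d : size (VN d) = (d.*2).+1.
Proof. by rewrite /VN /= size_flat2 size_enum_ord. Qed.

Lemma VN_pos d : (0 < size (VN d))%N.
Proof. by rewrite size_VN. Qed.

Lemma nth_VN d (j : 'I_d) :
  nth (@vzero d) (VN d) (j.*2).+1 = unitv j /\
  nth (@vzero d) (VN d) (j.*2).+2 = vopp (unitv j).
Proof.
rewrite /VN /=.
have := @nth_flat2 'I_d (vec d) (@vzero d) j (@unitv d) (fun j => vopp (unitv j)) (enum 'I_d) j.
by rewrite size_enum_ord ltn_ord nth_ord_enum => /(_ isT).
Qed.

Definition veq d (x y : vec d) : bool := [forall k, x k == y k].

Definition Grule d m (w : {ffun 'I_(size (VN d)) -> 'I_m.+4}) : 'I_m.+4 :=
  let w0 := w (Ordinal (VN_pos d)) in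
  if (val w0 == 0%N) &&
     [exists i : 'I_(size (VN d)), exists i' : 'I_(size (VN d)), veq (nth (@vzero d) (VN d) i') (vopp (nth (@vzero d) (VN d) i))
        && (w i == w i') && (2 <= w i)%N]
  then inord 1 else w0.

Lemma global_w0 d m (c : vec d -> 'I_m.+4) (z : vec d) :
  [ffun i : 'I_(size (VN d)) => c (vadd z (nth (@vzero d) (VN d) i))] (Ordinal (VN_pos d)) = c z.
Proof.
rewrite ffunE /=; congr c; apply: functional_extensionality => i.
by rewrite /vadd /vzero addr0.
Qed.

Lemma Grule_freezing d m : freezing (@Grule d m).
Proof.
exists (fun a b : 'I_m.+4 => (a == b) || ((val a == 1%N) && (val b == 0%N))).
split.
- by move=> a; rewrite eqxx.
- move=> a b /andP [/orP [/eqP //|/andP [/eqP a1 /eqP b0]]].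
  case/orP => [/eqP -> //|/andP [/eqP b1 _]].
  by rewrite b1 in b0.
- move=> b a c /orP [/eqP ->//|/andP [a1 b0]] /orP [/eqP <-|/andP [b1 c0]].
    by rewrite a1 b0 orbT.
  by rewrite (eqP b0) in b1.
- move=> c z; rewrite /global /Grule global_w0.
  case: ifP => [/andP [H _]|_]; last by rewrite eqxx.
  by rewrite H /= inordK // orbT.
Qed.

Local Open Scope ring_scope.

Definition cfg d m (j : 'I_d) (a y : 'I_m.+4) (x : vec d) : 'I_m.+4 :=
  if [forall k, (k != j) ==> (x k == 0)] then
    (if x j == 0 then inord 0 else if x j == -1 then a
     else if x j == 1 then y else inord 1)
  else inord 1.

Section Cfg.
Variables (d m : nat) (j : 'I_d).
Implicit Types (a y : 'I_m.+4) (x : vec d).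

Lemma cfg_ext a y x x' : (forall k, x k = x' k) -> cfg j a y x = cfg j a y x'.
Proof.
move=> H; rewrite /cfg H (eq_forallb (P2 := fun k => (k != j) ==> (x' k == 0))) //.
by move=> k; rewrite H.
Qed.

Lemma cfg_agreeL a a' y x : x j != -1 -> cfg j a y x = cfg j a' y x.
Proof. by move=> H; rewrite /cfg (negbTE H). Qed.

Lemma cfg_agreeR a y y' x : x j != 1 -> cfg j a y x = cfg j a y' x.
Proof. by move=> H; rewrite /cfg (negbTE H). Qed.

Lemma cfg_opp a y x x' : (forall k, x' k = - x k) -> cfg j a y x' = cfg j y a x.
Proof.
move=> H; rewrite /cfg (eq_forallb (P2 := fun k => (k != j) ==> (x k == 0))); last first.
  by move=> k; rewrite H oppr_eq0.
case: ifP => // _; rewrite H.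
case: (x j =P 0) => [->//|h0]; case: (x j =P -1) => [->//|h1]; case: (x j =P 1) => [->//|h2].
have -> : (- x j == 0) = false by apply/eqP; lia.
have -> : (- x j == -1) = false by apply/eqP; lia.
by have -> : (- x j == 1) = false by apply/eqP; lia.
Qed.

Lemma cfg_ge2 a y x : (2 <= cfg j a y x)%N -> cfg j a y x = cfg j y a x -> a = y.
Proof.
rewrite /cfg; case: ifP => _; last by rewrite /= inordK.
case: ifP => _; first by rewrite /= inordK.
case: ifP => _ //; case: ifP => _ //; by rewrite /= inordK.
Qed.

Lemma cfg_zero a y x : (2 <= a)%N -> (2 <= y)%N -> val (cfg j a y x) = 0%N ->
  forall k, x k = 0.
Proof.
rewrite /cfg => a2 y2; case: ifP => [/forallP H|_]; last by rewrite /= inordK.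
case: ifP => [/eqP hj _|_]; last first.
  case: ifP => _; first by move=> h; rewrite h in a2.
  case: ifP => _; first by move=> h; rewrite h in y2.
  by rewrite /= inordK.
move=> k; case: (k =P j) => [->//|/eqP kj].
by have := H k; rewrite kj /= => /eqP.
Qed.

End Cfg.

Lemma G_fix d m (j : 'I_d) (a y : 'I_m.+4) :
  a != y -> (2 <= a)%N -> (2 <= y)%N ->
  forall z, global (@Grule d m) (cfg j a y) z = cfg j a y z.
Proof.
move=> ay a2 y2 z; rewrite /global /Grule global_w0.
case: ifP => // /andP [/eqP z0 /existsP [i /existsP [i' /andP [/andP [hv /eqP he] h2]]]].
exfalso; move: he h2; rewrite !ffunE.
have zz := cfg_zero a2 y2 z0.
rewrite (@cfg_opp d m j a y (vadd z (nth (@vzero d) (VN d) i)) (vadd z (nth (@vzero d) (VN d) i'))); last first.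
  move=> k; move/forallP: hv => /(_ k) /eqP.
  by rewrite /vadd zz /vopp !add0r => ->.
move=> he h2; have := cfg_ge2 h2 he; apply/eqP; exact: ay.
Qed.

Lemma cfg_vzero d m (j : 'I_d) (a y : 'I_m.+4) : cfg j a y (@vzero d) = inord 0.
Proof.
rewrite /cfg /vzero eqxx.
by have -> : [forall k, (k != j) ==> ((0 : int) == 0)] by apply/forallP => k; rewrite implybT.
Qed.

Lemma G_fire d m (j : 'I_d) (a : 'I_m.+4) : (2 <= a)%N ->
  global (@Grule d m) (cfg j a a) (@vzero d) = inord 1.
Proof.
move=> a2; rewrite /global /Grule global_w0 cfg_vzero /= inordK // eqxx /=.
have [h1 h2] := nth_VN j.
have l1 : ((j.*2).+1 < size (VN d))%N by rewrite size_VN; have := ltn_ord j; lia.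
have l2 : ((j.*2).+2 < size (VN d))%N by rewrite size_VN; have := ltn_ord j; lia.
have e1 : cfg j a a (vadd (@vzero d) (unitv j)) = a.
  rewrite /cfg /vadd /vzero /unitv eqxx add0r.
  have -> : [forall k, (k != j) ==> ((0 + (if k == j then 1 else 0) : int) == 0)].
    by apply/forallP => k; case: (k =P j) => //=; rewrite add0r.
  by [].
have e2 : cfg j a a (vadd (@vzero d) (vopp (unitv j))) = a.
  rewrite /cfg /vadd /vzero /vopp /unitv eqxx add0r.
  have -> : [forall k, (k != j) ==> ((0 + - (if k == j then 1 else 0) : int) == 0)].
    by apply/forallP => k; case: (k =P j) => //=; rewrite add0r oppr0.
  by [].
case: existsP => // -[]; exists (Ordinal l1); apply/existsP; exists (Ordinal l2).
rewrite !ffunE /=.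
move: h1 h2; rewrite /VN /= => -> ->; rewrite e1 e2 eqxx a2 andbT andbT.
by apply/forallP => k.
Qed.

Lemma geo (t e1 e2 B : int) (R : nat) : 0 < B -> (R.*2)%:Z <= B ->
  (`|e1| <= R)%N -> (`|e2| <= R)%N -> ((t + e1) %/ B)%Z = 1 -> ((t + e2) %/ B)%Z != -1.
Proof. move=> *; apply/eqP => ?; lia. Qed.

Section FLemmas.
Variables (d : nat) (QF : finType) (NF : seq (vec d))
  (fF : {ffun 'I_(size NF) -> QF} -> QF).

Lemma glob_loc (u u' : vec d -> QF) x :
  (forall i : 'I_(size NF), u (vadd x (nth (@vzero d) NF i)) = u' (vadd x (nth (@vzero d) NF i))) ->
  global fF u x = global fF u' x.
Proof. by move=> H; rewrite /global; congr fF; apply/ffunP => i; rewrite !ffunE. Qed.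

Lemma fix_iter (u : vec d -> QF) : (forall x, global fF u x = u x) ->
  forall k x, iter k (global fF) u x = u x.
Proof.
move=> H; elim=> // k IH x /=.
by rewrite -[RHS]H; apply: glob_loc => i; rewrite IH.
Qed.

Lemma freeze_fix (le : rel QF) : reflexive le -> antisymmetric le -> transitive le ->
  (forall (c : vec d -> QF) z, le (global fF c z) (c z)) ->
  forall T (u : vec d -> QF), (0 < T)%N -> (forall x, iter T (global fF) u x = u x) ->
  forall x, global fF u x = u x.
Proof.
move=> rF aF tF zF T u T0 H x.
have mono : forall n, le (iter n.+1 (global fF) u x) (global fF u x).
  elim=> [|n IH] //=; apply: tF IH; exact: zF.
apply: aF; rewrite zF /=.
case: T T0 H => // n _ H.
by have := mono n; rewrite H.
Qed.

End FLemmas.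

Theorem theorem4 (d : nat) : (1 <= d)%N ->
  ~ exists (QF : finType) (NF : seq (vec d)) (fF : {ffun 'I_(size NF) -> QF} -> QF),
      freezing fF /\
      forall (QG : finType) (fG : {ffun 'I_(size (VN d)) -> QG} -> QG),
        freezing fG -> simulates_cf fF fG.
Proof.
move=> _ [QF [NF [fF [[leF [rF aF tF zF]] H]]]].
pose R := (\max_(i < size NF) \max_(k < d) `|nth (@vzero d) NF i k|%N)%N.
pose K := #|{ffun {ffun 'I_d -> 'I_(R.*2)} -> QF}|.
have [T [T0 [b [bpos [phi [inj sim]]]]]] := H _ (@Grule d K) (@Grule_freezing d K).
have bound : forall (i : 'I_(size NF)) k, (`|nth (@vzero d) NF i k| <= R)%N.
  move=> i k; apply: leq_trans (leq_bigmax i).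
  exact: (leq_bigmax (F := fun k => `|nth (@vzero d) NF i k|%N) k).
case: (boolP [exists j, (R.*2)%:Z <= b j]) => [/existsP [j Hj]|Hs].
- pose s1 : 'I_K.+4 := inord 2; pose s2 : 'I_K.+4 := inord 3.
  have v1 : val s1 = 2%N by rewrite /= inordK.
  have v2 : val s2 = 2%N.+1 by rewrite /= inordK.
  have s12 : s1 != s2 by apply/eqP => /(congr1 val); rewrite v1 v2.
  pose u a y := phibar b phi (cfg j a y).
  have fixu : forall a y : 'I_K.+4, a != y -> (2 <= a)%N -> (2 <= y)%N ->
      forall x, global fF (u a y) x = u a y x.
    move=> a y ay a2 y2; apply: (freeze_fix rF aF tF zF T0) => x.
    by rewrite -sim /u /phibar G_fix.
  have key : forall x, global fF (u s1 s1) x = u s1 s1 x.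
    move=> x.
    case: (boolP ([forall i : 'I_(size NF), ((vadd x (nth (@vzero d) NF i) j) %/ b j)%Z != 1]
                  && ((x j %/ b j)%Z != 1))) => [/andP [/forallP A1 A2]|nA].
    + transitivity (global fF (u s1 s2) x).
        apply: glob_loc => i; rewrite /u /phibar (@cfg_agreeR _ _ j s1 s1 s2) //.
      rewrite fixu ?v1 ?v2 // /u /phibar (@cfg_agreeR _ _ j s1 s2 s1) //.
    + have [e1 [he1 Hq1]] : exists e1 : int, (`|e1| <= R)%N /\ ((x j + e1) %/ b j)%Z = 1.
        move: nA; rewrite negb_and negbK => /orP [/forallPn [i /negPn /eqP Hi] | /eqP Hx].
        * by exists (nth (@vzero d) NF i j); split; [exact: bound | exact Hi].
        * by exists 0; rewrite addr0.
      transitivity (global fF (u s2 s1) x).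
        apply: glob_loc => i; rewrite /u /phibar (@cfg_agreeL _ _ j s1 s2 s1) //.
        exact: (geo (bpos j) Hj he1 (bound i j) Hq1).
      rewrite fixu ?v1 ?v2 // 1?eq_sym // /u /phibar (@cfg_agreeL _ _ j s2 s1 s1) //.
      have := geo (bpos j) Hj he1 (isT : (`|0%R : int| <= R)%N) Hq1.
      by rewrite addr0.
  have itfix := fix_iter key T.
  have := inj (global (@Grule d K) (cfg j s1 s1)) (cfg j s1 s1) _ (@vzero d).
  rewrite G_fire ?v1 // cfg_vzero => E.
  have /(congr1 val) := E (fun x => etrans (sim _ x) (itfix x)).
  by rewrite /= !inordK.
- have small : forall j, b j < (R.*2)%:Z.
    move=> j; move/existsPn: Hs => /(_ j); rewrite -ltNge //.
  pose psi (q : 'I_K.+4) : {ffun {ffun 'I_d -> 'I_(R.*2)} -> QF} :=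
    [ffun r : {ffun 'I_d -> 'I_(R.*2)} => phi q (fun i => (r i : nat)%:Z)].
  have psi_inj : injective psi.
    move=> q1 q2 E.
    apply: (inj (fun _ => q1) (fun _ => q2) _ (@vzero d)) => x; rewrite /phibar.
    have lt : forall i, (`|(x i %% b i)%Z| < R.*2)%N.
      move=> i; have := small i; have := bpos i.
      have := ltz_pmod (x i) (bpos i).
      have := modz_ge0 (x i) (lt0r_neq0 (bpos i)); lia.
    pose r : {ffun 'I_d -> 'I_(R.*2)} := [ffun i => Ordinal (lt i)].
    have -> : (fun i => (x i %% b i)%Z) = (fun i => (r i : nat)%:Z).
      apply: functional_extensionality => i; rewrite ffunE /=.
      have := modz_ge0 (x i) (lt0r_neq0 (bpos i)); lia.
    by move/ffunP: E => /(_ r); rewrite !ffunE.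
  have := @leq_card _ _ psi psi_inj; rewrite card_ord -/K; lia.
Qed.
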